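(* Let $R\subseteq\mathbb{R}^2$ be open and let $f:R\to\mathbb{R}^2$ be $C^1$. Let $R_0$ be a connected component of $R\setminus f^{-1}(f(S)\cup C(f))$, choose $z_0\in R_0$, let $w_0=f(z_0)$, and let $\Omega_0$ be the connected component of $\mathbb{R}^2\setminus(f(S)\cup C(f))$ containing $w_0$. Then $f(R_0)=\Omega_0$.
   Context: Write $f=(u,v)$; $J_f=u_xv_y-u_yv_x$ and $S=\{z\in R: J_f(z)=0\}$. $C(f)$ is the set of finite points $\zeta\in\mathbb{R}^2$ for which there is a sequence $(z_n)\subset R$ converging to a point of $\partial R$ or with $|z_n|\to\infty$, such that $f(z_n)\to\zeta$. *)

(* Defs.v *)
From HB Require Import structures.
From mathcomp Require Import all_boot all_order all_algebra.
From mathcomp Require Import all_classical all_reals all_analysis.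
Set Implicit Arguments. Unset Strict Implicit. Unset Printing Implicit Defensive.
Import Order.TTheory GRing.Theory Num.Theory.
Import numFieldNormedType.Exports.
Local Open Scope classical_set_scope.
Local Open Scope ring_scope.

Definition e1 {R : realType} : R * R := (1, 0).
Definition e2 {R : realType} : R * R := (0, 1).

Definition C1_on {R : realType} (D : set (R * R)) (f : R * R -> R * R) : Prop :=
  (forall z, D z -> derivable f z e1 /\ derivable f z e2) /\
  {within D, continuous (fun z => 'D_e1 f z)} /\
  {within D, continuous (fun z => 'D_e2 f z)}.

Definition jacobian {R : realType} (f : R * R -> R * R) (z : R * R) : R :=
  ('D_e1 f z).1 * ('D_e2 f z).2 - ('D_e2 f z).1 * ('D_e1 f z).2.

Definition critset {R : realType} (D : set (R * R)) (f : R * R -> R * R) : set (R * R) :=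
  [set z | D z /\ jacobian f z = 0].

Definition clusterset {R : realType} (D : set (R * R)) (f : R * R -> R * R) : set (R * R) :=
  [set zeta | exists zn : nat -> R * R,
     (forall n, D (zn n)) /\
     ((exists p, closure D p /\ ~ D p /\ zn @ \oo --> p) \/
      ((fun n => `|zn n|) @ \oo --> +oo)) /\
     (f \o zn) @ \oo --> zeta].

(* Main.v *)
Require Import Defs.
From HB Require Import structures.
From mathcomp Require Import all_boot all_order all_algebra.
From mathcomp Require Import all_classical all_reals all_analysis.
From mathcomp Require Import ring lra.
Import Order.TTheory GRing.Theory Num.Theory.
Import numFieldNormedType.Exports.
Local Open Scope classical_set_scope.
Local Open Scope ring_scope.
Section S.
Variable R : realType.
Implicit Types (f : R * R -> R * R) (p z : R * R).

Lemma fst_cvg {T : Type} {F : set_system T} {FF : Filter F} {q : T -> R * R} {l : R * R} :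
  q @ F --> l -> (fun t => (q t).1) @ F --> l.1.
Proof.
move=> /cvgrPdist_lt H; apply/cvgrPdist_lt => e e0.
apply: filterS (H e e0) => t; apply: le_lt_trans.
by rewrite [X in _ <= X]prod_normE le_max lexx.
Qed.

Lemma snd_cvg {T : Type} {F : set_system T} {FF : Filter F} {q : T -> R * R} {l : R * R} :
  q @ F --> l -> (fun t => (q t).2) @ F --> l.2.
Proof.
move=> /cvgrPdist_lt H; apply/cvgrPdist_lt => e e0.
apply: filterS (H e e0) => t; apply: le_lt_trans.
by rewrite [X in _ <= X]prod_normE le_max lexx orbT.
Qed.

Lemma is_derive_fst (g : R -> R * R) (t : R) (d : R * R) :
  is_derive t 1 g d -> is_derive t 1 (fun s => (g s).1) d.1.
Proof.
move=> [dg dv].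
have H := fst_cvg dg.
rewrite /derive in dv; rewrite dv in H.
have H' : (fun h : R => h^-1 *: (((fun s => (g s).1) \o shift t) (h *: 1) - (g t).1)) @ 0^'
   --> d.1 by exact: H.
by apply: DeriveDef; [apply/cvg_ex; exists d.1 | exact: norm_cvg_lim H'].
Qed.

Lemma is_derive_snd (g : R -> R * R) (t : R) (d : R * R) :
  is_derive t 1 g d -> is_derive t 1 (fun s => (g s).2) d.2.
Proof.
move=> [dg dv].
have H := snd_cvg dg.
rewrite /derive in dv; rewrite dv in H.
have H' : (fun h : R => h^-1 *: (((fun s => (g s).2) \o shift t) (h *: 1) - (g t).2)) @ 0^'
   --> d.2 by exact: H.
by apply: DeriveDef; [apply/cvg_ex; exists d.2 | exact: norm_cvg_lim H'].
Qed.

Lemma partial1 f p : derivable f p e1 ->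
  is_derive p.1 1 (fun s => f (s, p.2)) ('D_e1 f p).
Proof.
move=> dp.
have E : (fun h : R => h^-1 *: (((fun s => f (s, p.2)) \o shift p.1) (h *: 1) - (fun s => f (s, p.2)) p.1))
  = (fun h : R => h^-1 *: ((f \o shift p) (h *: e1) - f p)).
  apply: funext => h /=; rewrite -surjective_pairing; congr (_ *: (f _ - _)).
  by case: p {dp} => a b /=; rewrite /e1; apply: injective_projections => /=; rewrite ?scaler0 ?add0r.
by apply: DeriveDef; rewrite /derivable /derive E.
Qed.

Lemma partial2 f p : derivable f p e2 ->
  is_derive p.2 1 (fun s => f (p.1, s)) ('D_e2 f p).
Proof.
move=> dp.
have E : (fun h : R => h^-1 *: (((fun s => f (p.1, s)) \o shift p.2) (h *: 1) - (fun s => f (p.1, s)) p.2))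
  = (fun h : R => h^-1 *: ((f \o shift p) (h *: e2) - f p)).
  apply: funext => h /=; rewrite -surjective_pairing; congr (_ *: (f _ - _)).
  by case: p {dp} => a b /=; rewrite /e2; apply: injective_projections => /=; rewrite ?scaler0 ?add0r.
by apply: DeriveDef; rewrite /derivable /derive E.
Qed.
End S.
Section S2.
Variable R : realType.

Lemma mvi_le (phi dphi : R -> R) (a b c K : R) : a <= b ->
  (forall t, a <= t <= b -> is_derive t 1 phi (dphi t)) ->
  (forall t, a <= t <= b -> `|dphi t - c| <= K) ->
  `|phi b - phi a - (b - a) * c| <= K * `|b - a|.
Proof.
move=> ab Hd Hb.
set psi := phi - c \*: id.
have Hpsi : forall t, a <= t <= b -> is_derive t 1 psi (dphi t - c).
  by move=> t /Hd H; apply: is_derive_eq; rewrite /= ?scaler1 ?mulr1 //. 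
have cont : {within `[a, b], continuous psi}.
  apply: derivable_within_continuous => t; rewrite in_itv /= => /Hpsi H.
  exact: ex_derive.
have Hpsi' : forall t, t \in `]a, b[ -> is_derive t 1 psi ((fun t => dphi t - c) t).
  by move=> t; rewrite in_itv /= => /andP[h1 h2]; apply: Hpsi; rewrite !ltW.
have [x xab E] := MVT_segment ab Hpsi' cont.
move: xab; rewrite in_itv /= => xab.
have Epsi : forall t, psi t = phi t - c * t by [].
have -> : phi b - phi a - (b - a) * c = psi b - psi a.
  rewrite !Epsi; ring.
rewrite E normrM; apply: ler_pM => //; exact: Hb.
Qed.
End S2.
Definition pr {R : realType} (i : bool) (v : R * R) : R := if i then v.1 else v.2.

Section S3.
Variable R : realType.

Lemma prB i (u v : R * R) : pr i (u - v) = pr i u - pr i v.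
Proof. by case: i. Qed.
Lemma prN i (u : R * R) : pr i (- u) = - pr i u.
Proof. by case: i. Qed.
Lemma prD i (u v : R * R) : pr i (u + v) = pr i u + pr i v.
Proof. by case: i. Qed.
Lemma prZ i a (v : R * R) : pr i (a *: v) = a * pr i v.
Proof. by case: i. Qed.
Lemma pr_norm i (v : R * R) : `|pr i v| <= `|v|.
Proof. by case: i; rewrite [X in _ <= X]prod_normE le_max lexx ?orbT. Qed.
Lemma norm_pr_le (v : R * R) M : (forall i, `|pr i v| <= M) -> `|v| <= M.
Proof. by move=> H; rewrite prod_normE ge_max (H true) (H false). Qed.
Lemma is_derive_pr i (g : R -> R * R) (t : R) (d : R * R) :
  is_derive t 1 g d -> is_derive t 1 (fun s => pr i (g s)) (pr i d).
Proof. by case: i; [exact: is_derive_fst | exact: is_derive_snd]. Qed.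

Lemma mvi (phi dphi : R -> R) (a b c K : R) :
  (forall t, `|t - a| <= `|b - a| -> is_derive t 1 phi (dphi t)) ->
  (forall t, `|t - a| <= `|b - a| -> `|dphi t - c| <= K) ->
  `|phi b - phi a - (b - a) * c| <= K * `|b - a|.
Proof.
move=> Hd Hb; case: (leP a b) => ab.
  apply: mvi_le => // t /andP[h1 h2].
    by apply: Hd; rewrite !ger0_norm ?subr_ge0 //; lra.
  by apply: Hb; rewrite !ger0_norm ?subr_ge0 //; lra.
rewrite -normrN distrC.
have -> : - (phi b - phi a - (b - a) * c) = phi a - phi b - (a - b) * c by ring.
apply: mvi_le; first exact: ltW.
  by move=> t /andP[h1 h2]; apply: Hd; rewrite ler0_norm ?ler0_norm; lra.
by move=> t /andP[h1 h2]; apply: Hb; rewrite ler0_norm ?ler0_norm; lra.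
Qed.

Lemma nbhs_normE {x : R * R} {Q : set (R * R)} :
  nbhs x Q -> exists2 r, 0 < r & forall y, `|y - x| < r -> Q y.
Proof.
move=> /nbhs_normP[r r0 H]; exists r => // y yr; apply: H.
by rewrite /ball_ /= distrC.
Qed.

Lemma cont_near {g : R * R -> R * R} {z : R * R} {e : R} : g @ z --> g z -> 0 < e ->
  nbhs z [set y | `|g y - g z| <= e].
Proof.
move=> /cvgrPdist_le H e0; apply: filterS (H e e0) => y /=.
by rewrite distrC.
Qed.

Lemma split3 (a b A c d u v : R) :
  a - b - (c * u + d * v) = (a - A - c * u) + (A - b - d * v).
Proof. ring. Qed.

Lemma half_sum (e a b m : R) : 0 <= e -> a <= m -> b <= m -> e / 2 * a + e / 2 * b <= e * m.
Proof. move=> e0 am bm; nra. Qed.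

Lemma FE {D : set (R * R)} {f : R * R -> R * R} {z : R * R} : open D -> C1_on D f -> D z -> forall e, 0 < e ->
  exists2 r, 0 < r & (forall y, `|y - z| < r -> D y) /\
   forall y, `|y - z| < r ->
   `|f y - f z - ((y.1 - z.1) *: 'D_e1 f z + (y.2 - z.2) *: 'D_e2 f z)| <= e * `|y - z|.
Proof.
move=> oD [Hd [c1 c2]] Dz e e0.
rewrite continuous_open_subspace // in c1.
rewrite continuous_open_subspace // in c2.
have e20 : 0 < e / 2 by rewrite divr_gt0.
have N1 := cont_near (c1 z (mem_set Dz)) e20.
have N2 := cont_near (c2 z (mem_set Dz)) e20.
have ND : nbhs z D by apply: open_nbhs_nbhs; split.
have [r r0 Hr] := nbhs_normE (filterI ND (filterI N1 N2)).
exists r => //; split; first by move=> y /Hr [].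
move=> y yz.
have Hpt : forall t s, `|t - z.1| <= `|y.1 - z.1| -> `|s - z.2| <= `|y.2 - z.2| ->
    `|(t, s) - z| < r.
  move=> t s h1 h2; apply: le_lt_trans yz.
  rewrite prod_normE [X in _ <= X]prod_normE /= ge_max !le_max h1 h2 /=.
  by rewrite orbT.
apply: norm_pr_le => i.
have E1 : forall t, `|t - z.1| <= `|y.1 - z.1| ->
    is_derive t 1 (fun s => pr i (f (s, y.2))) (pr i ('D_e1 f (t, y.2))).
  move=> t ht; apply: is_derive_pr.
  have := Hpt t y.2 ht (lexx _) => /Hr [Dp _].
  exact: (@partial1 _ f (t, y.2) (proj1 (Hd _ Dp))).
have E2 : forall t, `|t - z.2| <= `|y.2 - z.2| ->
    is_derive t 1 (fun s => pr i (f (z.1, s))) (pr i ('D_e2 f (z.1, t))).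
  move=> t ht; apply: is_derive_pr.
  have : `|(z.1, t) - z| < r by apply: Hpt => //; rewrite subrr normr0.
  move=> /Hr [Dp _].
  exact: (@partial2 _ f (z.1, t) (proj2 (Hd _ Dp))).
have B1 := @mvi _ _ _ _ (pr i ('D_e1 f z)) (e / 2) E1.
have B2 := @mvi _ _ _ _ (pr i ('D_e2 f z)) (e / 2) E2.
have {}B1 : `|pr i (f (y.1, y.2)) - pr i (f (z.1, y.2)) - (y.1 - z.1) * pr i ('D_e1 f z)|
   <= e / 2 * `|y.1 - z.1|.
  apply: B1 => t ht; rewrite -prB; apply: le_trans (pr_norm i _) _.
  have := Hpt t y.2 ht (lexx _) => /Hr [_ [h _]].
  exact: h.
have {}B2 : `|pr i (f (z.1, y.2)) - pr i (f (z.1, z.2)) - (y.2 - z.2) * pr i ('D_e2 f z)|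
   <= e / 2 * `|y.2 - z.2|.
  apply: B2 => t ht; rewrite -prB; apply: le_trans (pr_norm i _) _.
  have : `|(z.1, t) - z| < r by apply: Hpt => //; rewrite subrr normr0.
  move=> /Hr [_ [_ h]].
  exact: h.
rewrite -!surjective_pairing in B1 B2.
have -> : pr i (f y - f z - ((y.1 - z.1) *: 'D_e1 f z + (y.2 - z.2) *: 'D_e2 f z)) =
  pr i (f y) - pr i (f z) - ((y.1 - z.1) * pr i ('D_e1 f z) + (y.2 - z.2) * pr i ('D_e2 f z)).
  by case: i {E1 E2 B1 B2}.
set A := pr i (f (z.1, y.2)) in B1 B2.
rewrite (split3 _ _ A).
apply: le_trans (ler_normD _ _) _.
apply: le_trans (lerD B1 B2) _.
apply: half_sum; first exact: ltW.
  exact: (pr_norm true (y - z)).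
exact: (pr_norm false (y - z)).
Qed.
End S3.

Arguments fst_cvg {R T F FF q l}.
Arguments snd_cvg {R T F FF q l}.
Arguments is_derive_fst {R}.
Arguments is_derive_snd {R}.
Arguments partial1 {R}.
Arguments partial2 {R}.
Arguments mvi_le {R}.
Arguments prB {R}.
Arguments prN {R}.
Arguments prD {R}.
Arguments prZ {R}.
Arguments pr_norm {R}.
Arguments norm_pr_le {R}.
Arguments is_derive_pr {R}.
Arguments mvi {R}.
Arguments nbhs_normE {R x Q}.
Arguments cont_near {R g z e}.
Arguments split3 {R}.
Arguments half_sum {R}.
Arguments FE {R D f z}.

Section S4.
Variable R : realType.

Lemma nbhs_normI {x : R * R} {Q : set (R * R)} :
  (exists2 r, 0 < r & forall y, `|y - x| < r -> Q y) -> nbhs x Q.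
Proof.
move=> [r r0 H]; apply: (proj2 (nbhs_normP x Q)); exists r => // y /= xy; apply: H.
by rewrite distrC.
Qed.

Lemma lin_norm (a b : R) (d1 d2 : R * R) :
  `|a *: d1 + b *: d2| <= `|(a, b)| * (`|d1| + `|d2|).
Proof.
apply: le_trans (ler_normD _ _) _.
rewrite !prod_norm_scale mulrDr.
apply: lerD; apply: ler_wpM2r => //; [exact: (pr_norm true (a, b)) | exact: (pr_norm false (a, b))].
Qed.

Lemma fcont {D : set (R * R)} {f : R * R -> R * R} {z : R * R} :
  open D -> C1_on D f -> D z -> f @ z --> f z.
Proof.
move=> oD hf Dz; have [r r0 [_ Hr]] := FE oD hf Dz _ ltr01.
apply/cvgrPdist_lt => e e0.
set M := `|'D_e1 f z| + `|'D_e2 f z| + 1.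
have M0 : 0 < M by rewrite /M ltr_pwDr // addr_ge0.
apply: nbhs_normI; exists (Num.min r (e / M)).
  by rewrite lt_min r0 divr_gt0.
move=> y; rewrite lt_min => /andP[yr ye].
have := Hr y yr; rewrite mul1r => H.
have L := lin_norm (y.1 - z.1) (y.2 - z.2) ('D_e1 f z) ('D_e2 f z).
have yz : `|(y.1 - z.1, y.2 - z.2)| = `|y - z| by [].
rewrite yz in L.
rewrite distrC.
set u := (y.1 - z.1) *: 'D_e1 f z + (y.2 - z.2) *: 'D_e2 f z in H L.
have -> : f y - f z = (f y - f z - u) + u by rewrite subrK.
apply: le_lt_trans (ler_normD _ _) _.
apply: le_lt_trans (lerD H L) _.
rewrite -[X in X + _]mulr1 -mulrDr [1 + _]addrC.
by rewrite ltr_pdivlMr // in ye.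
Qed.

Lemma Jcont {D : set (R * R)} {f : R * R -> R * R} {z : R * R} :
  open D -> C1_on D f -> D z -> Defs.jacobian f @ z --> Defs.jacobian f z.
Proof.
move=> oD [_ [c1 c2]] Dz.
rewrite continuous_open_subspace // in c1.
rewrite continuous_open_subspace // in c2.
have h1 := c1 z (mem_set Dz); have h2 := c2 z (mem_set Dz).
rewrite /Defs.jacobian; apply: cvgB; apply: cvgM.
- exact: (fst_cvg h1).
- exact: (snd_cvg h2).
- exact: (fst_cvg h2).
- exact: (snd_cvg h1).
Qed.

Lemma Jnz {D : set (R * R)} {f : R * R -> R * R} {z : R * R} :
  open D -> C1_on D f -> D z -> Defs.jacobian f z != 0 ->
  nbhs z [set y | Defs.jacobian f y != 0].
Proof.
move=> oD hf Dz Jz.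
have /cvgrPdist_lt H := Jcont oD hf Dz.
have := H `|Defs.jacobian f z|; rewrite normr_gt0 => /(_ Jz).
apply: filterS => y /= h; apply/negP => /eqP Jy.
by rewrite Jy subr0 ltxx in h.
Qed.

Lemma lin_lb {d1 d2 : R * R} : d1.1 * d2.2 - d2.1 * d1.2 != 0 ->
  exists2 c, 0 < c & forall v : R * R, c * `|v| <= `|v.1 *: d1 + v.2 *: d2|.
Proof.
move: d1 d2 => [p q] [r s] /= det0.
set det := p * s - r * q.
set S := `|p| + `|q| + `|r| + `|s| + 1.
have S0 : 0 < S by rewrite /S ltr_pwDr // !addr_ge0.
have dp : 0 < `|det| by rewrite normr_gt0.
exists (`|det| / S); first exact: divr_gt0.
move=> [a b] /=.
set u1 := a * p + b * r; set u2 := a * q + b * s.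
have -> : a *: (p, q) + b *: (r, s) = (u1, u2) by [].
have Ha : a * det = u1 * s - u2 * r by rewrite /u1 /u2 /det; ring.
have Hb : b * det = u2 * p - u1 * q by rewrite /u2 /u1 /det; ring.
set m := `|(u1, u2)|.
have m1 : `|u1| <= m by exact: (pr_norm true (u1, u2)).
have m2 : `|u2| <= m by exact: (pr_norm false (u1, u2)).
have key : forall x y z w : R, `|x * y - z * w| <= m * S ->
   `|x| <= m -> `|z| <= m -> `|x * y - z * w| <= m * S by [].
rewrite mulrAC ler_pdivrMr // prod_normE maxr_pMr // ge_max.
apply/andP; split.
- rewrite -normrM mulrC Ha; apply: le_trans (ler_normB _ _) _.
  rewrite !normrM.
  have : `|u1| * `|s| <= m * `|s| by apply: ler_wpM2r.
  have : `|u2| * `|r| <= m * `|r| by apply: ler_wpM2r.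
  have : 0 <= m := normr_ge0 _.
  have : 0 <= `|p| := normr_ge0 _. have : 0 <= `|q| := normr_ge0 _.
  rewrite /S; nra.
- rewrite -normrM mulrC Hb; apply: le_trans (ler_normB _ _) _.
  rewrite !normrM.
  have : `|u2| * `|p| <= m * `|p| by apply: ler_wpM2r.
  have : `|u1| * `|q| <= m * `|q| by apply: ler_wpM2r.
  have : 0 <= m := normr_ge0 _.
  have : 0 <= `|r| := normr_ge0 _. have : 0 <= `|s| := normr_ge0 _.
  rewrite /S; nra.
Qed.

Lemma sq_norm (v : R * R) : `|v| ^+ 2 <= v.1 ^+ 2 + v.2 ^+ 2 /\ v.1 ^+ 2 + v.2 ^+ 2 <= 2 * `|v| ^+ 2.
Proof.
have h1 : `|v.1| <= `|v| by exact: (pr_norm true v).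
have h2 : `|v.2| <= `|v| by exact: (pr_norm false v).
have h3 : `|v| <= `|v.1| \/ `|v| <= `|v.2|.
  by apply/orP; rewrite -le_max -prod_normE.
have e1 : v.1 ^+ 2 = `|v.1| ^+ 2 by rewrite real_normK // num_real.
have e2 : v.2 ^+ 2 = `|v.2| ^+ 2 by rewrite real_normK // num_real.
rewrite e1 e2.
have := normr_ge0 v.1; have := normr_ge0 v.2.
move: h1 h2 h3; move: `|v.1| `|v.2| `|v| => a b m h1 h2 h3 a0 b0.
case: h3 => h3; split; nra.
Qed.

Lemma cball_compact (z : R * R) (rho : R) : 0 < rho -> compact [set y | `|y - z| <= rho].
Proof.
move=> r0.
have -> : [set y | `|y - z| <= rho] = closed_ball z.1 rho `*` closed_ball z.2 rho.
  rewrite !closed_ballE //; apply/seteqP; split => y /=.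
    rewrite prod_normE ge_max => /andP[h1 h2].
    by rewrite /closed_ball_ /= !(distrC z.1) !(distrC z.2); split.
  rewrite /closed_ball_ /= => -[h1 h2].
  by rewrite prod_normE ge_max; apply/andP; split; rewrite /= distrC.
by apply: compact_setX; apply: closed_ballR_compact.
Qed.

Lemma sqcvg {T : Type} {F : set_system T} {FF : Filter F} (q1 q2 : T -> R) (l1 l2 c1 c2 : R) :
  q1 @ F --> l1 -> q2 @ F --> l2 ->
  (fun t => (q1 t - c1) * (q1 t - c1) + (q2 t - c2) * (q2 t - c2)) @ F -->
  (l1 - c1) * (l1 - c1) + (l2 - c2) * (l2 - c2).
Proof.
move=> h1 h2.
have k1 : (fun t => q1 t - c1) @ F --> l1 - c1 by apply: cvgB => //; exact: cvg_cst.
have k2 : (fun t => q2 t - c2) @ F --> l2 - c2 by apply: cvgB => //; exact: cvg_cst.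
by apply: cvgD; apply: cvgM.
Qed.

Lemma sqd (p1 p2 : R -> R) (s a b c1 c2 : R) :
  is_derive s 1 p1 a -> is_derive s 1 p2 b ->
  is_derive s 1 (fun t => (p1 t - c1) * (p1 t - c1) + (p2 t - c2) * (p2 t - c2))
    (2 * ((p1 s - c1) * a + (p2 s - c2) * b)).
Proof.
move=> d1 d2.
have e1 : is_derive s 1 (p1 - cst c1) (a - 0) by exact: is_deriveB.
have e2 : is_derive s 1 (p2 - cst c2) (b - 0) by exact: is_deriveB.
have m1 := is_deriveM e1 e1.
have m2 := is_deriveM e2 e2.
have := is_deriveD m1 m2.
move=> H.
have -> : (fun t => (p1 t - c1) * (p1 t - c1) + (p2 t - c2) * (p2 t - c2)) =
  (p1 - cst c1) * (p1 - cst c1) + (p2 - cst c2) * (p2 - cst c2) by [].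
apply: is_derive_eq.
transitivity ((p1 s - c1) * a + (p1 s - c1) * a + ((p2 s - c2) * b + (p2 s - c2) * b)).
  by rewrite !subr0.
ring.
Qed.

Lemma fermat1 (g dg : R -> R) (x0 eta : R) : 0 < eta ->
  (forall s, `|s - x0| < eta -> is_derive s 1 g (dg s)) ->
  (forall s, `|s - x0| < eta -> g x0 <= g s) -> dg x0 = 0.
Proof.
move=> e0 Hd Hm.
have I : forall t, t \in `]x0 - eta, x0 + eta[ -> `|t - x0| < eta.
  move=> t; rewrite in_itv /= => /andP[h1 h2]; rewrite ltr_norml; apply/andP; split; lra.
have H0 : is_derive x0 1 g 0.
  apply: (@derive1_at_min _ g (x0 - eta) (x0 + eta)).
  - lra.
  - by move=> t /I /Hd [].
  - by rewrite in_itv /=; apply/andP; split; lra.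
  - by move=> t /I /Hm.
have H1 : is_derive x0 1 g (dg x0) by apply: Hd; rewrite subrr normr0.
case: H0 => _ E0; case: H1 => _ E1.
by rewrite -E1 E0.
Qed.

Lemma tri (a b : R * R) : `|a| <= `|b| + `|b - a|.
Proof.
have := ler_normB b (b - a); rewrite subKr.
by move/le_trans; apply; rewrite lexx.
Qed.

Lemma solve0 (a1 a2 p q r s : R) : a1 * p + a2 * q = 0 -> a1 * r + a2 * s = 0 ->
  p * s - r * q != 0 -> a1 = 0 /\ a2 = 0.
Proof.
move=> h1 h2 d.
have E1 : a1 * (p * s - r * q) = 0.
  have -> : a1 * (p * s - r * q) = s * (a1 * p + a2 * q) - q * (a1 * r + a2 * s) by ring.
  by rewrite h1 h2 !mulr0 subrr.
have E2 : a2 * (p * s - r * q) = 0.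
  have -> : a2 * (p * s - r * q) = p * (a1 * r + a2 * s) - r * (a1 * p + a2 * q) by ring.
  by rewrite h1 h2 !mulr0 subrr.
move/eqP: E1; move/eqP: E2; rewrite !mulf_eq0 (negbTE d) !orbF => /eqP -> /eqP ->.
by [].
Qed.

Lemma gdiff (a b c : R * R) : a - b - (a - c) = c - b.
Proof. by apply: injective_projections => /=; ring. Qed.

Lemma LS {D : set (R * R)} {f : R * R -> R * R} {z : R * R} :
  open D -> C1_on D f -> D z -> Defs.jacobian f z != 0 -> forall r, 0 < r ->
  exists2 d, 0 < d & forall w, `|w - f z| < d -> exists y, `|y - z| < r /\ D y /\ f y = w.
Proof.
move=> oD hf Dz Jz r r0.
have [c c0 Hc] := lin_lb Jz.
have c20 : 0 < c / 2 by rewrite divr_gt0.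
have [r1 r10 [HD1 HF]] := FE oD hf Dz _ c20.
have [r2 r20 HJ] := nbhs_normE (Jnz oD hf Dz Jz).
set rho := Num.min r (Num.min r1 r2) / 2.
have m0 : 0 < Num.min r (Num.min r1 r2) by rewrite !lt_min r0 r10 r20.
have rho0 : 0 < rho by rewrite divr_gt0.
have rhom : rho < Num.min r (Num.min r1 r2) by rewrite /rho; lra.
move: rhom; rewrite !lt_min => /and3P[rr rr1 rr2].
set K := [set y | `|y - z| <= rho].
have KD : forall y, K y -> D y by move=> y Ky; apply: HD1; apply: le_lt_trans Ky rr1.
have fc : forall y, K y -> f @ y --> f y by move=> y /KD Dy; exact: fcont oD hf Dy.
exists (c * rho / 8); first by rewrite !divr_gt0 ?mulr_gt0.
move=> w hw.
set g := fun y => (pr true (f y) - w.1) * (pr true (f y) - w.1) +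
                  (pr false (f y) - w.2) * (pr false (f y) - w.2).
have gc : {within K, continuous g}.
  apply: continuous_in_subspaceT => y /set_mem Ky.
  exact: sqcvg (fst_cvg (fc y Ky)) (snd_cvg (fc y Ky)).
have Kz : K z by rewrite /K /= subrr normr0 ltW.
have [x /set_mem Kx xmin] := compact_EVT_min (ex_intro _ z Kz) (cball_compact z rho rho0) gc.
have gE : forall y, `|f y - w| ^+ 2 <= g y /\ g y <= 2 * `|f y - w| ^+ 2.
  by move=> y; have := sq_norm (f y - w); rewrite !expr2.
have xin : `|x - z| < rho.
  rewrite lt_neqAle Kx andbT; apply/eqP => xe.
  have H := xmin z (mem_set Kz).
  have A : c * rho <= `|(x - z).1 *: 'D_e1 f z + (x - z).2 *: 'D_e2 f z| by rewrite -xe.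
  have B := HF x (le_lt_trans Kx rr1).
  rewrite xe in B.
  have C := tri ((x - z).1 *: 'D_e1 f z + (x - z).2 *: 'D_e2 f z) (f x - f z).
  have Dd : `|f x - f z| <= `|f x - w| + `|f z - w|.
    have := tri (f x - f z) (f x - w).
    by rewrite gdiff.
  rewrite distrC in hw.
  have [F _] := gE x.
  have [_ G] := gE z.
  move: A B C Dd hw F G H.
  set L := `|(x - z).1 *: 'D_e1 f z + (x - z).2 *: 'D_e2 f z|.
  set M := `|f x - f z - ((x - z).1 *: 'D_e1 f z + (x - z).2 *: 'D_e2 f z)|.
  set N := `|f x - f z|.
  set a := `|f x - w|.
  set b := `|f z - w|.
  have b0 : 0 <= b := normr_ge0 _.
  move: (g x) (g z) => gx gz A B C Dd hw F G H.
  set k := c * rho / 8 in hw.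
  have k0 : 0 < k by rewrite /k !divr_gt0 ?mulr_gt0.
  have a3 : 3 * k <= a.
    have : c / 2 * rho = 4 * k by rewrite /k; field.
    have : c * rho = 8 * k by rewrite /k; field.
    lra.
  have S1 : (3 * k) * (3 * k) <= a * a by apply: ler_pM => //; lra.
  have S2 : b * b <= k * k by apply: ler_pM => //; lra.
  move: F G; rewrite !expr2 => F G.
  nra.
set eta := rho - `|x - z|.
have eta0 : 0 < eta by rewrite /eta subr_gt0.
have Dx : D x by exact: KD.
have Pt1 : forall s, `|s - x.1| < eta -> `|(s, x.2) - z| < rho.
  move=> s hs; rewrite prod_normE gt_max /=; apply/andP; split.
    have : `|s - z.1| <= `|s - x.1| + `|x.1 - z.1|.
      by have := ler_normD (s - x.1) (x.1 - z.1); rewrite addrA subrK.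
    have : `|x.1 - z.1| <= `|x - z| by exact: (pr_norm true (x - z)).
    rewrite /eta in hs; lra.
  have : `|x.2 - z.2| <= `|x - z| by exact: (pr_norm false (x - z)).
  lra.
have Pt2 : forall s, `|s - x.2| < eta -> `|(x.1, s) - z| < rho.
  move=> s hs; rewrite prod_normE gt_max /=; apply/andP; split.
    have : `|x.1 - z.1| <= `|x - z| by exact: (pr_norm true (x - z)).
    lra.
  have : `|s - z.2| <= `|s - x.2| + `|x.2 - z.2|.
    by have := ler_normD (s - x.2) (x.2 - z.2); rewrite addrA subrK.
  have : `|x.2 - z.2| <= `|x - z| by exact: (pr_norm false (x - z)).
  rewrite /eta in hs; lra.
have F1 : 2 * ((pr true (f (x.1, x.2)) - w.1) * pr true ('D_e1 f (x.1, x.2)) +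
               (pr false (f (x.1, x.2)) - w.2) * pr false ('D_e1 f (x.1, x.2))) = 0.
  apply: (@fermat1 (fun s => g (s, x.2))
     (fun s => 2 * ((pr true (f (s, x.2)) - w.1) * pr true ('D_e1 f (s, x.2)) +
               (pr false (f (s, x.2)) - w.2) * pr false ('D_e1 f (s, x.2)))) x.1 eta eta0).
    move=> s /Pt1 hs.
    have Ds : D (s, x.2) by apply: KD; rewrite /K /= ltW.
    have d := @partial1 _ f (s, x.2) (proj1 ((proj1 hf) _ Ds)).
    exact: (sqd _ _ _ _ _ w.1 w.2 (is_derive_pr true _ _ _ d) (is_derive_pr false _ _ _ d)).
  move=> s /Pt1 hs; rewrite -surjective_pairing; apply: xmin.
  by apply: mem_set; rewrite /K /= ltW.
have F2 : 2 * ((pr true (f (x.1, x.2)) - w.1) * pr true ('D_e2 f (x.1, x.2)) +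
               (pr false (f (x.1, x.2)) - w.2) * pr false ('D_e2 f (x.1, x.2))) = 0.
  apply: (@fermat1 (fun s => g (x.1, s))
     (fun s => 2 * ((pr true (f (x.1, s)) - w.1) * pr true ('D_e2 f (x.1, s)) +
               (pr false (f (x.1, s)) - w.2) * pr false ('D_e2 f (x.1, s)))) x.2 eta eta0).
    move=> s /Pt2 hs.
    have Ds : D (x.1, s) by apply: KD; rewrite /K /= ltW.
    have d := @partial2 _ f (x.1, s) (proj2 ((proj1 hf) _ Ds)).
    exact: (sqd _ _ _ _ _ w.1 w.2 (is_derive_pr true _ _ _ d) (is_derive_pr false _ _ _ d)).
  move=> s /Pt2 hs; rewrite -surjective_pairing; apply: xmin.
  by apply: mem_set; rewrite /K /= ltW.
rewrite -!surjective_pairing in F1 F2.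
have Jx : Defs.jacobian f x != 0 by apply: HJ; apply: lt_trans xin rr2.
move/eqP: F1; rewrite mulf_eq0 pnatr_eq0 /= => /eqP F1.
move/eqP: F2; rewrite mulf_eq0 pnatr_eq0 /= => /eqP F2.
have [h1 h2] := solve0 _ _ _ _ _ _ F1 F2 Jx.
exists x; split; first exact: lt_trans xin rr.
split => //.
apply: injective_projections.
  by apply/eqP; rewrite -subr_eq0; apply/eqP; exact: h1.
by apply/eqP; rewrite -subr_eq0; apply/eqP; exact: h2.
Qed.
End S4.

Arguments fst_cvg {R T F FF q l}.
Arguments snd_cvg {R T F FF q l}.
Arguments is_derive_fst {R}.
Arguments is_derive_snd {R}.
Arguments partial1 {R}.
Arguments partial2 {R}.
Arguments mvi_le {R}.
Arguments prB {R}.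
Arguments prN {R}.
Arguments prD {R}.
Arguments prZ {R}.
Arguments pr_norm {R}.
Arguments norm_pr_le {R}.
Arguments is_derive_pr {R}.
Arguments mvi {R}.
Arguments nbhs_normE {R x Q}.
Arguments cont_near {R g z e}.
Arguments split3 {R}.
Arguments half_sum {R}.
Arguments FE {R D f z}.

Arguments nbhs_normI {R x Q}. Arguments lin_norm {R}. Arguments fcont {R D f z}. Arguments Jcont {R D f z}. Arguments Jnz {R D f z}. Arguments lin_lb {R d1 d2}. Arguments sq_norm {R}. Arguments cball_compact {R}. Arguments sqcvg {R T F FF}. Arguments sqd {R}. Arguments fermat1 {R}. Arguments tri {R}. Arguments solve0 {R}. Arguments gdiff {R}. Arguments LS {R D f z}.

Fixpoint subs (g : nat -> nat -> nat) (k : nat) : nat :=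
  if k is k'.+1 then g k (subs g k').+1 else g 0%N 0%N.

Section S5.
Variable R : realType.

Lemma evP (P : nat -> Prop) : (\forall n \near \oo, P n) <-> exists N, forall n, (N <= n)%N -> P n.
Proof.
split; first by move=> [N _ H]; exists N.
by move=> [N H]; exists N.
Qed.

Lemma archi (x : R) : exists N : nat, x < N%:R.
Proof.
case: (leP 0 x) => x0; first by exists (Num.Def.archi_bound x); exact: archi_boundP.
by exists 0%N.
Qed.

Lemma inv_small {e : R} : 0 < e -> exists N : nat, forall k, (N <= k)%N -> k.+1%:R^-1 < e.
Proof.
move=> e0; have [N HN] := archi e^-1; exists N => k Nk.
rewrite -(invrK e) ltf_pV2 ?posrE ?invr_gt0 //.
apply: lt_le_trans HN _; rewrite ler_nat; exact: leqW.
Qed.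

Lemma subs_ge (g : nat -> nat -> nat) : (forall k N, (N <= g k N)%N) -> forall k, (k <= subs g k)%N.
Proof.
move=> Hg; elim=> [|k IH] //=.
apply: leq_ltn_trans IH _; exact: Hg.
Qed.

Lemma K0 {D : set (R * R)} {f : R * R -> R * R} : open D -> C1_on D f ->
  forall (zn : nat -> R * R) (w : R * R), (forall n, D (zn n)) -> (f \o zn) @ \oo --> w ->
  clusterset D f w \/ exists p, D p /\ f p = w /\
    (forall e, 0 < e -> forall N, exists2 n, (N <= n)%N & `|zn n - p| < e).
Proof.
move=> oD hf zn w Dz fw.
case: (pselect ((fun n => `|zn n|) @ \oo --> +oo)) => [Hi|Hni].
  by left; exists zn; split => //; split => //; right.
have [M HM] : exists M : R, forall N, exists2 n, (N <= n)%N & `|zn n| < M.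
  apply: contrapT => HH; apply: Hni; apply/cvgryPge => A.
  apply: contrapT => HA; apply: HH; exists A => N.
  apply: contrapT => HN; apply: HA; apply/evP; exists N => n Nn.
  rewrite leNgt; apply/negP => h; apply: HN; by exists n.
set M' := Num.max M 1.
have M'0 : 0 < M' by rewrite lt_max ltr01 orbT.
set G := filter_from [set: nat] (fun N => [set zn n | n in [set n | (N <= n)%N /\ `|zn n| < M]]).
have GF : Filter G.
  apply: filter_from_filter; first by exists 0%N.
  move=> i j _ _; exists (maxn i j) => // y [n [h1 h2] <-]; split.
    by exists n => //; split => //; apply: leq_trans h1; exact: leq_maxl.
  by exists n => //; split => //; apply: leq_trans h1; exact: leq_maxr.
have GP : ProperFilter G.
  apply: filter_from_proper => N _.
  have [n Nn hn] := HM N; by exists (zn n); exists n.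
have cK := cball_compact 0 M' M'0.
have GK : G [set y | `|y - 0| <= M'].
  exists 0%N => // y [n [_ hn] <-] /=; rewrite subr0; apply: ltW.
  by apply: lt_le_trans hn _; rewrite le_max lexx.
have [p [Kp Cp]] := cK G GP GK.
have Hcl : forall e, 0 < e -> forall N, exists2 n, (N <= n)%N & `|zn n - p| < e.
  move=> e e0 N.
  have GN : G [set zn n | n in [set n | (N <= n)%N /\ `|zn n| < M]] by exists N.
  have Nb : nbhs p [set y | `|y - p| < e] by apply: nbhs_normI; exists e.
  have [y [[n [Nn _] <-] hy]] := Cp _ _ GN Nb.
  by exists n.
case: (pselect (D p)) => Dp.
  right; exists p; split => //; split => //.
  apply/eqP; rewrite -subr_eq0 -normr_le0; apply/ler_addgt0Pr => e e0.
  rewrite add0r.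
  have e20 : 0 < e / 2 by rewrite divr_gt0.
  have /cvgrPdist_lt /(_ _ e20) /nbhs_normE [d d0 Hd] := fcont oD hf Dp.
  have /cvgrPdist_lt /(_ _ e20) /evP [N HN] := fw.
  have [n Nn hn] := Hcl d d0 N.
  have h1 := Hd _ hn; have h2 := HN n Nn.
  rewrite /= in h1 h2.
  have -> : f p - w = (f p - f (zn n)) + (f (zn n) - w) by rewrite addrA subrK.
  apply: le_trans (ler_normD _ _) _; rewrite distrC in h2.
  apply: ltW; rewrite [e]splitr; exact: ltrD.
left.
have Hc : forall kN : nat * nat, exists n, (kN.2 <= n)%N /\ `|zn n - p| < kN.1.+1%:R^-1.
  move=> [k N]; have kp : 0 < k.+1%:R^-1 :> R by rewrite invr_gt0.
  have [n Nn hn] := Hcl _ kp N.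
  by exists n.
have [g0 Hg0] := choice Hc.
set g := fun k N => g0 (k, N).
have Hg : forall k N, (N <= g k N)%N /\ `|zn (g k N) - p| < k.+1%:R^-1 by move=> k N; exact: (Hg0 (k, N)).
set phi := subs g.
have phik : forall k, (k <= phi k)%N by apply: subs_ge => k N; exact: (Hg k N).1.
have phid : forall k, `|zn (phi k) - p| < k.+1%:R^-1.
  by case=> [|k]; [exact: (Hg 0%N 0%N).2 | exact: (Hg k.+1 _).2].
exists (zn \o phi); split; first by move=> n; exact: Dz.
split.
  left; exists p; split.
    move=> B /nbhs_normE [r r0 Hr].
    have [n _ hn] := Hcl r r0 0%N.
    by exists (zn n); split => //; apply: Hr.
  split => //.
  apply/cvgrPdist_lt => e e0; apply/evP.
  have [N HN] := inv_small e0; exists N => k Nk.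
  by rewrite distrC; apply: lt_trans (phid k) (HN k Nk).
apply/cvgrPdist_lt => e e0; apply/evP.
have /cvgrPdist_lt /(_ _ e0) /evP [N HN] := fw.
exists N => k Nk; apply: (HN (phi k)); exact: leq_trans Nk (phik k).
Qed.

Lemma Bclosed {D : set (R * R)} {f : R * R -> R * R} : open D -> C1_on D f ->
  closed (f @` critset D f `|` clusterset D f).
Proof.
move=> oD hf w Cw.
have Hb : forall n : nat, exists z, D z /\ `|f z - w| < 2 * n.+1%:R^-1 /\
    (critset D f z \/ (exists q, ~ D q /\ `|z - q| < n.+1%:R^-1) \/ n%:R < `|z|).
  move=> n; set en : R := n.+1%:R^-1.
  have en0 : 0 < en by rewrite invr_gt0.
  have en2 : en < 2 * en by rewrite ltr_pMl // ltr1n.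
  have Nb : nbhs w [set y | `|y - w| < en] by apply: nbhs_normI; exists en.
  have [b [Bb hb]] := Cw _ Nb.
  rewrite /= in hb.
  case: Bb => [[s Ss fsb] | [zs [Dzs [Hesc Hfz]]]].
    rewrite -fsb in hb; exists s; split; first exact: Ss.1.
    by split; [exact: lt_trans hb en2 | left].
  have /cvgrPdist_lt /(_ _ en0) /evP [N1 HN1] := Hfz.
  have tri2 : forall m, (N1 <= m)%N -> `|f (zs m) - w| < 2 * en.
    move=> m hm; have h1 := HN1 m hm; rewrite /= distrC in h1.
    have -> : f (zs m) - w = (f (zs m) - b) + (b - w) by rewrite addrA subrK.
    apply: le_lt_trans (ler_normD _ _) _.
    by rewrite mulr2n mulrDl mul1r; apply: ltrD.
  case: Hesc => [[p [_ [Dp zp]]] | Hinf].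
    have /cvgrPdist_lt /(_ _ en0) /evP [N2 HN2] := zp.
    exists (zs (maxn N1 N2)); split; first exact: Dzs.
    split; first by apply: tri2; exact: leq_maxl.
    right; left; exists p; split => //.
    by rewrite distrC; apply: HN2; exact: leq_maxr.
  have /cvgryPge /(_ n.+1%:R) /evP [N2 HN2] := Hinf.
  exists (zs (maxn N1 N2)); split; first exact: Dzs.
  split; first by apply: tri2; exact: leq_maxl.
  right; right; apply: lt_le_trans (HN2 _ (leq_maxr _ _)).
  by rewrite ltr_nat.
have [zn Hzn] := choice Hb.
have fw : (f \o zn) @ \oo --> w.
  apply/cvgrPdist_lt => e e0; apply/evP.
  have e20 : 0 < e / 2 by rewrite divr_gt0.
  have [N HN] := inv_small e20; exists N => k Nk.
  have [_ [h _]] := Hzn k.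
  rewrite distrC; apply: lt_trans h _.
  have := HN k Nk; move: (k.+1%:R^-1 : R) => x hx; lra.
have [Hc|[p [Dp [fp Hcl]]]] := K0 oD hf zn w (fun n => (Hzn n).1) fw; first by right.
left; exists p => //; split => //.
apply/eqP; rewrite -normr_le0; apply/ler_addgt0Pr => e e0; rewrite add0r.
have /cvgrPdist_lt /(_ _ e0) /nbhs_normE [d d0 Hd] := Jcont oD hf Dp.
have /nbhs_normE [r r0 Hr] : nbhs p D by apply: open_nbhs_nbhs; split.
have [N1 HN1] := archi (`|p| + r).
have r20 : 0 < r / 2 by rewrite divr_gt0.
have [N2 HN2] := inv_small r20.
have m0 : 0 < Num.min d (r / 2) by rewrite lt_min d0 r20.
have [n Nn hn] := Hcl _ m0 (maxn N1 N2).
move: hn; rewrite lt_min => /andP[hd hr].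
have [_ [_ [[_ J0]|[[q [Dq hq]]|big]]]] := Hzn n.
- by have := Hd _ hd; rewrite /= J0 subr0 => /ltW.
- exfalso; apply: Dq; apply: Hr.
  have hq' : `|zn n - q| < r / 2 by apply: lt_trans hq (HN2 n _); exact: leq_trans (leq_maxr _ _) Nn.
  have -> : q - p = (zn n - p) - (zn n - q) by rewrite gdiff.
  apply: le_lt_trans (ler_normB _ _) _; rewrite [r]splitr; exact: ltrD.
- exfalso.
  have h1 : `|zn n| <= `|zn n - p| + `|p| by have := ler_normD (zn n - p) p; rewrite subrK.
  have h2 : (N1%:R : R) <= n%:R by rewrite ler_nat; exact: leq_trans (leq_maxl _ _) Nn.
  have : `|zn n| < `|p| + r by lra.
  lra.
Qed.
Lemma ball_connected (p : R * R) (r : R) : 0 < r -> connected [set y | `|y - p| < r].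
Proof.
move=> r0.
set seg := fun y : R * R => (fun t : R => p + t *: (y - p)) @` `[0, 1].
have E : [set y | `|y - p| < r] = \bigcup_(y in [set y | `|y - p| < r]) seg y.
  apply/seteqP; split => [y hy | x [y hy [t ht <-]]].
    exists y => //; exists 1; first by rewrite /= in_itv /= lexx ler01.
    by rewrite scale1r addrC subrK.
  rewrite /= [p + _]addrC addrK prod_norm_scale.
  move: ht; rewrite /= in_itv /= => /andP[t0 t1].
  apply: le_lt_trans hy; rewrite ger0_norm //.
  by rewrite -[X in _ <= X]mul1r; apply: ler_wpM2r.
rewrite E; apply: bigcup_connected.
  exists p => y _; exists 0; first by rewrite /= in_itv /= lexx ler01.
  by rewrite scale0r addr0.
move=> y _; apply: connected_continuous_connected; first exact: segment_connected.
apply: continuous_subspaceT => t.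
apply: cvgD; first exact: cvg_cst.
exact: scalel_continuous.
Qed.

Lemma comp_ball (U : set (R * R)) (x y : R * R) : open U -> connected_component U x y ->
  exists2 r, 0 < r & forall y', `|y' - y| < r -> connected_component U x y'.
Proof.
move=> oU Cy; have Uy := connected_component_sub Cy.
have /nbhs_normE [r r0 Hr] : nbhs y U by apply: open_nbhs_nbhs; split.
exists r => // y' hy'.
rewrite (same_connected_component Cy).
apply: (connected_component_max (B := [set z | `|z - y| < r])) => //.
- by rewrite /= subrr normr0.
- exact: ball_connected.
Qed.

Lemma comp_closure (U : set (R * R)) (x p : R * R) : open U -> U p ->
  (forall e, 0 < e -> exists y, connected_component U x y /\ `|y - p| < e) ->
  connected_component U x p.
Proof.
move=> oU Up H.
have /nbhs_normE [r r0 Hr] : nbhs p U by apply: open_nbhs_nbhs; split.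
have [y [Cy hy]] := H r r0.
apply: connected_component_trans Cy _.
apply: connected_component_sym.
apply: (connected_component_max (B := [set z | `|z - p| < r])) => //.
- by rewrite /= subrr normr0.
- exact: ball_connected.
Qed.
End S5.
Arguments archi {R}. Arguments inv_small {R e}.
Arguments K0 {R D f}. Arguments Bclosed {R D f}. Arguments ball_connected {R}.
Arguments comp_ball {R}. Arguments comp_closure {R}.

Theorem theorem3p10 (R : realType) (D : set (R * R)) (f : R * R -> R * R)
  (hD : open D) (hf : C1_on D f) (z0 : R * R) :
  let B := f @` critset D f `|` clusterset D f in
  (D `\` f @^-1` B) z0 ->
  f @` connected_component (D `\` f @^-1` B) z0 =
  connected_component (~` B) (f z0).
Proof.
move=> B Uz0.
have Bc : closed B := Bclosed hD hf.
have oNB : open (~` B) := closed_openC Bc.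
set U := D `\` f @^-1` B.
have fcU : forall z, U z -> f @ z --> f z by move=> z [Dz _]; exact: fcont hD hf Dz.
have oU : open U.
  rewrite openE => z [Dz nBz].
  have N1 : nbhs (f z) (~` B) by apply: open_nbhs_nbhs; split.
  have N2 : nbhs z (f @^-1` (~` B)) := fcont hD hf Dz _ N1.
  have N3 : nbhs z D by apply: open_nbhs_nbhs; split.
  by apply: filterS (filterI N3 N2) => y [h1 h2]; split.
set R0 := connected_component U z0.
set Om := connected_component (~` B) (f z0).
apply/seteqP; split.
  apply: connected_component_max.
  - by exists z0 => //; exact: connected_component_refl.
  - by move=> w [z Rz <-]; have [_ nB] := connected_component_sub Rz.
  - apply: connected_continuous_connected; first exact: component_connected.
    apply: continuous_in_subspaceT => z /set_mem Rz.
    exact: fcU (connected_component_sub Rz).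
have cOm : connected Om by exact: component_connected.
suff E : Om `&` (f @` R0) = Om by move=> w Omw; rewrite -E in Omw; case: Omw.
apply: cOm.
- exists (f z0); split; first exact: connected_component_refl (Uz0.2).
  by exists z0 => //; exact: connected_component_refl.
- exists (f @` R0) => //.
  rewrite openE => w [z Rz <-].
  have [Dz nBz] := connected_component_sub Rz.
  have Jz : Defs.jacobian f z != 0.
    apply/eqP => J0; apply: nBz; left; exists z => //.
  have [r r0 Hr] := comp_ball _ _ _ oU Rz.
  have [d d0 Hd] := LS hD hf Dz Jz r r0.
  apply: nbhs_normI; exists d => // w' hw'.
  have [y [hy [Dy fy]]] := Hd w' hw'.
  by exists y; [exact: Hr | exact: fy].
exists (closure (f @` R0)); first exact: closed_closure.
apply/seteqP; split => w [Omw Ww]; split => //.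
  exact: subset_closure.
have nBw : ~ B w := connected_component_sub Omw.
have Hb : forall n : nat, exists z, R0 z /\ `|f z - w| < n.+1%:R^-1.
  move=> n.
  have en0 : 0 < n.+1%:R^-1 :> R by rewrite invr_gt0.
  have Nb : nbhs w [set y | `|y - w| < n.+1%:R^-1] by apply: nbhs_normI; exists n.+1%:R^-1.
  have [y [[z Rz <-] h]] := Ww _ Nb.
  by exists z.
have [zn Hzn] := choice Hb.
have fw : (f \o zn) @ \oo --> w.
  apply/cvgrPdist_lt => e e0; apply/evP.
  have [N HN] := inv_small e0; exists N => k Nk.
  have [_ h] := Hzn k.
  by rewrite distrC; apply: lt_trans h (HN k Nk).
have Dzn : forall n, D (zn n) by move=> n; have [Rz _] := Hzn n; exact: (connected_component_sub Rz).1.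
have [Hc|[p [Dp [fp Hcl]]]] := K0 hD hf zn w Dzn fw.
  by exfalso; apply: nBw; right.
exists p => //.
apply: comp_closure => //.
  by split => //; rewrite /preimage /= fp.
move=> e e0; have [n _ hn] := Hcl e e0 0%N.
by exists (zn n); split => //; exact: (Hzn n).1.
Qed.
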